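(* Let $Y\subseteq\omega$ and let $X\subseteq\omega$ be $\Delta^0_2(Y)$. Then there is a sequence of structures $(\mathcal C_i)_{i\in\omega}$, uniformly computable in $Y$, such that for every $i\in\omega$, $\mathcal C_i\cong\mathcal S_0$ if $i\in X$ and $\mathcal C_i\cong\mathcal S_1$ if $i\notin X$.
   Context: Let $\mathcal S=(2^\omega,(F_\nu)_{\nu\in 2^{<\omega}},(R_\nu)_{\nu\in2^{<\omega}})$ where $F_\nu(\sigma)(x)=\sigma(x)+\nu(x)\bmod 2$ (with $\nu(x)=0$ for $x\ge|\nu|$) and $R_\nu(\sigma)$ holds iff $\nu$ is an initial segment of $\sigma$. Let $\hat{\mathcal S}_0$, $\hat{\mathcal S}_1$ be the substructures of $\mathcal S$ generated by the constant sequence $\bar0$, resp. $\bar1$, and let $\mathcal S_0,\mathcal S_1$ be their relational versions obtained by replacing each unary function $F_\nu$ by its graph, a binary relation $graph_{F_\nu}$. Structures have universe $\omega$. *)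

(* Defs.v *)
From Stdlib Require Import Arith List.
Import ListNotations.

Fixpoint tri (n : nat) : nat := match n with 0 => 0 | S k => S k + tri k end.
Definition pair (x y : nat) : nat := tri (x + y) + y.
(* unpair enumerates N x N in the same (Cantor) order as pair *)
Definition unpair_step (p : nat * nat) : nat * nat :=
  match p with (0, y) => (S y, 0) | (S x, y) => (x, S y) end.
Fixpoint unpair (n : nat) : nat * nat :=
  match n with 0 => (0, 0) | S k => unpair_step (unpair k) end.

Inductive code : Type :=
| cZero | cSucc | cId | cOracle | cFst | cSnd
| cPair (f g : code)
| cComp (f g : code)
| cPrec (f g : code)      (* h <x,0> = f x ; h <x,n+1> = g <x,<n,h<x,n>>> *)
| cMu (f : code).

Inductive eval (Y : nat -> bool) : code -> nat -> nat -> Prop :=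
| ev_zero x : eval Y cZero x 0
| ev_succ x : eval Y cSucc x (S x)
| ev_id x : eval Y cId x x
| ev_oracle x : eval Y cOracle x (if Y x then 1 else 0)
| ev_fst x : eval Y cFst x (fst (unpair x))
| ev_snd x : eval Y cSnd x (snd (unpair x))
| ev_pair f g x a b : eval Y f x a -> eval Y g x b -> eval Y (cPair f g) x (pair a b)
| ev_comp f g x y z : eval Y g x y -> eval Y f y z -> eval Y (cComp f g) x z
| ev_prec0 f g x a : eval Y f x a -> eval Y (cPrec f g) (pair x 0) a
| ev_precS f g x n a b : eval Y (cPrec f g) (pair x n) a ->
    eval Y g (pair x (pair n a)) b -> eval Y (cPrec f g) (pair x (S n)) b
| ev_mu f x n : eval Y f (pair x n) 0 ->
    (forall m, m < n -> exists k, eval Y f (pair x m) (S k)) ->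
    eval Y (cMu f) x n.

Definition fun_computable (Y : nat -> bool) (f : nat -> nat) : Prop :=
  exists c : code, forall x, eval Y c x (f x).

Definition rel_computable (Y : nat -> bool) (P : nat -> Prop) : Prop :=
  exists chi : nat -> bool, (forall x, P x <-> chi x = true) /\
    fun_computable Y (fun x => if chi x then 1 else 0).

Definition Sigma02 (Y X : nat -> bool) : Prop :=
  exists R : nat -> Prop, rel_computable Y R /\
    forall n, X n = true <-> exists a, forall b, R (pair n (pair a b)).
Definition Pi02 (Y X : nat -> bool) : Prop :=
  exists R : nat -> Prop, rel_computable Y R /\
    forall n, X n = true <-> forall a, exists b, R (pair n (pair a b)).
Definition Delta02 (Y X : nat -> bool) : Prop := Sigma02 Y X /\ Pi02 Y X.

(* nu : 2^{<omega} is a list bool; nu(x) = 0 (false) for x >= |nu| *)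
Definition F (nu : list bool) (sigma : nat -> bool) : nat -> bool :=
  fun x => xorb (sigma x) (nth x nu false).
Definition Rnu (nu : list bool) (sigma : nat -> bool) : Prop :=
  forall x, x < length nu -> sigma x = nth x nu false.

(* the universe of the substructure of S generated by the constant sequence b̄ *)
Inductive gen (b : bool) : (nat -> bool) -> Prop :=
| gen_base : gen b (fun _ => b)
| gen_step nu sigma : gen b sigma -> gen b (F nu sigma).

(* relational structures with universe omega in the language
   { graph_{F_nu} (binary), R_nu (unary) : nu in 2^{<omega} } *)
Record rstruct : Type := {
  rG : list bool -> nat -> nat -> Prop;
  rR : list bool -> nat -> Prop
}.

(* A ≅ S_b  (relational version of the substructure generated by b̄);
   elements of 2^omega are compared pointwise *)
Definition iso_S (A : rstruct) (b : bool) : Prop :=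
  exists h : nat -> (nat -> bool),
    (forall x, gen b (h x)) /\
    (forall x y, (forall n, h x n = h y n) -> x = y) /\
    (forall sigma, gen b sigma -> exists x, forall n, h x n = sigma n) /\
    (forall nu x y, rG A nu x y <-> (forall n, h y n = F nu (h x) n)) /\
    (forall nu x, rR A nu x <-> Rnu nu (h x)).

(* coding of 2^{<omega} into omega (a bijection) *)
Fixpoint code_bl (l : list bool) : nat :=
  match l with
  | [] => 0
  | b :: l' => S (pair (if b then 1 else 0) (code_bl l'))
  end.

(* a sequence of structures uniformly computable in Y: their atomic diagrams
   are uniformly Y-computable *)
Definition unif_computable (Y : nat -> bool) (C : nat -> rstruct) : Prop :=
  (exists PG : nat -> Prop, rel_computable Y PG /\
     forall i nu x y, rG (C i) nu x y <-> PG (pair i (pair (code_bl nu) (pair x y)))) /\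
  (exists PR : nat -> Prop, rel_computable Y PR /\
     forall i nu x, rR (C i) nu x <-> PR (pair i (pair (code_bl nu) x))).

(* Main.v *)
Require Import Defs.
From Stdlib Require Import Arith List Lia Bool Classical FunctionalExtensionality.
Import ListNotations.

Arguments pair : simpl never.

Lemma tri_ge k : k <= tri k.
Proof. induction k; simpl; lia. Qed.

Lemma pair_ge x y : x + y <= pair x y.
Proof. unfold pair. pose proof (tri_ge (x+y)). lia. Qed.

Lemma pair_Sx x y : pair x (S y) = S (pair (S x) y).
Proof. unfold pair. replace (x + S y) with (S x + y) by lia. lia. Qed.

Lemma pair_S0 y : pair (S y) 0 = S (pair 0 y).
Proof. unfold pair. rewrite !Nat.add_0_r. simpl. lia. Qed.

Lemma unpair_pair x y : unpair (pair x y) = (x, y).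
Proof.
  remember (x + y) as d eqn:Hd. revert x y Hd.
  induction d as [|d IH]; intros x y Hd.
  - assert (x = 0) by lia; assert (y = 0) by lia; subst. reflexivity.
  - revert x Hd. induction y as [|y IHy]; intros x Hd.
    + replace x with (S d) by lia. rewrite pair_S0.
      change (unpair (S (pair 0 d))) with (unpair_step (unpair (pair 0 d))).
      rewrite (IH 0 d) by lia. reflexivity.
    + rewrite pair_Sx.
      change (unpair (S (pair (S x) y))) with (unpair_step (unpair (pair (S x) y))).
      rewrite (IHy (S x)) by lia. reflexivity.
Qed.

Lemma pair_unpair n : pair (fst (unpair n)) (snd (unpair n)) = n.
Proof.
  induction n as [|n IH]; [reflexivity|].
  change (unpair (S n)) with (unpair_step (unpair n)).
  destruct (unpair n) as [[|x] y]; simpl in *.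
  - rewrite pair_S0. congruence.
  - rewrite pair_Sx. congruence.
Qed.

Definition p1 n := fst (unpair n).
Definition p2 n := snd (unpair n).
Lemma p1_pair a b : p1 (pair a b) = a.
Proof. unfold p1; rewrite unpair_pair; reflexivity. Qed.
Lemma p2_pair a b : p2 (pair a b) = b.
Proof. unfold p2; rewrite unpair_pair; reflexivity. Qed.
Hint Rewrite p1_pair p2_pair : pr.
Arguments p1 : simpl never.
Arguments p2 : simpl never.

Definition bnat (b : bool) := if b then 1 else 0.

Lemma C_ext {Y} {f g : nat -> nat} : fun_computable Y f -> (forall x, f x = g x) -> fun_computable Y g.
Proof. intros [c Hc] E. exists c. intros x. rewrite <- E. apply Hc. Qed.

Lemma C_id {Y} : fun_computable Y (fun x => x).
Proof. exists cId. intros x. constructor. Qed.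
Lemma C_zero {Y} : fun_computable Y (fun _ => 0).
Proof. exists cZero. intros x. constructor. Qed.
Lemma C_comp {Y} {f g : nat -> nat} : fun_computable Y f -> fun_computable Y g -> fun_computable Y (fun x => f (g x)).
Proof. intros [cf Hf] [cg Hg]. exists (cComp cf cg). intros x. econstructor; eauto. Qed.
Lemma C_Sc {Y} {a : nat -> nat} : fun_computable Y a -> fun_computable Y (fun x => S (a x)).
Proof. intros [c H]. exists (cComp cSucc c). intros x. econstructor; [apply H| constructor]. Qed.
Lemma C_p1c {Y} {a : nat -> nat} : fun_computable Y a -> fun_computable Y (fun x => p1 (a x)).
Proof. intros [c H]. exists (cComp cFst c). intros x. econstructor; [apply H | apply ev_fst]. Qed.
Lemma C_p2c {Y} {a : nat -> nat} : fun_computable Y a -> fun_computable Y (fun x => p2 (a x)).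
Proof. intros [c H]. exists (cComp cSnd c). intros x. econstructor; [apply H | apply ev_snd]. Qed.
Lemma C_pair {Y} {f g : nat -> nat} : fun_computable Y f -> fun_computable Y g -> fun_computable Y (fun x => pair (f x) (g x)).
Proof. intros [cf Hf] [cg Hg]. exists (cPair cf cg). intros x. constructor; auto. Qed.
Lemma C_const {Y} k : fun_computable Y (fun _ => k).
Proof. induction k. apply C_zero. apply (C_Sc IHk). Qed.

Fixpoint prim (f g : nat -> nat) (x n : nat) : nat :=
  match n with 0 => f x | S n => g (pair x (pair n (prim f g x n))) end.

Lemma C_prec {Y} {f g : nat -> nat} : fun_computable Y f -> fun_computable Y g ->
  fun_computable Y (fun p => prim f g (p1 p) (p2 p)).
Proof.
  intros [cf Hf] [cg Hg]. exists (cPrec cf cg).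
  assert (K : forall x n, eval Y (cPrec cf cg) (pair x n) (prim f g x n)).
  { intros x n; induction n; simpl. apply ev_prec0, Hf. eapply ev_precS; [exact IHn| apply Hg]. }
  intros p. specialize (K (p1 p) (p2 p)). unfold p1, p2 in *. rewrite pair_unpair in K. exact K.
Qed.

Lemma C_precc {Y} {f g a n : nat -> nat} : fun_computable Y f -> fun_computable Y g ->
  fun_computable Y a -> fun_computable Y n ->
  fun_computable Y (fun x => prim f g (a x) (n x)).
Proof.
  intros Hf Hg Ha Hn. eapply C_ext. apply (C_comp (C_prec Hf Hg) (C_pair Ha Hn)).
  intros x; cbv beta. autorewrite with pr. reflexivity.
Qed.

Definition CB Y (P : nat -> bool) := fun_computable Y (fun x => bnat (P x)).

Lemma CB_ext {Y} {P Q : nat -> bool} : CB Y P -> (forall x, P x = Q x) -> CB Y Q.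
Proof. intros H E. eapply C_ext. exact H. intros x; cbv beta. rewrite E. reflexivity. Qed.

Lemma CB_compc {Y} {P : nat -> bool} {a : nat -> nat} : CB Y P -> fun_computable Y a -> CB Y (fun x => P (a x)).
Proof. intros HP Ha. exact (C_comp HP Ha). Qed.

Lemma C_condc {Y} {b : nat -> bool} {u v : nat -> nat} : CB Y b -> fun_computable Y u -> fun_computable Y v ->
  fun_computable Y (fun x => if b x then u x else v x).
Proof.
  intros Hb Hu Hv. eapply C_ext.
  apply (@C_precc Y v (fun q => u (p1 q)) (fun x => x) (fun x => bnat (b x)) Hv (C_comp Hu (C_p1c C_id)) C_id Hb).
  intros x; cbv beta. destruct (b x); simpl; autorewrite with pr; reflexivity.
Qed.

Lemma CB_and {Y} {P Q : nat -> bool} : CB Y P -> CB Y Q -> CB Y (fun x => P x && Q x).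
Proof. intros HP HQ. eapply C_ext. apply (C_condc HP HQ (C_const 0)). intros x; cbv beta. destruct (P x); reflexivity. Qed.
Lemma CB_neg {Y} {P : nat -> bool} : CB Y P -> CB Y (fun x => negb (P x)).
Proof. intros HP. eapply C_ext. apply (C_condc HP (C_const 0) (C_const 1)). intros x; cbv beta. destruct (P x); reflexivity. Qed.
Lemma CB_or {Y} {P Q : nat -> bool} : CB Y P -> CB Y Q -> CB Y (fun x => P x || Q x).
Proof. intros HP HQ. eapply C_ext. apply (C_condc HP (C_const 1) HQ). intros x; cbv beta. destruct (P x); reflexivity. Qed.
Lemma CB_eqb {Y} {P Q : nat -> bool} : CB Y P -> CB Y Q -> CB Y (fun x => Bool.eqb (P x) (Q x)).
Proof. intros HP HQ. eapply C_ext. apply (C_condc HP HQ (CB_neg HQ)). intros x; cbv beta. destruct (P x), (Q x); reflexivity. Qed.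
Lemma CB_xorb {Y} {P Q : nat -> bool} : CB Y P -> CB Y Q -> CB Y (fun x => xorb (P x) (Q x)).
Proof. intros HP HQ. eapply C_ext. apply (C_condc HP (CB_neg HQ) HQ). intros x; cbv beta. destruct (P x), (Q x); reflexivity. Qed.

Lemma CB_eqz {Y} {a : nat -> nat} : fun_computable Y a -> CB Y (fun x => a x =? 0).
Proof.
  intros Ha. eapply C_ext.
  apply (@C_precc Y (fun _ => 1) (fun _ => 0) (fun _ => 0) a (C_const 1) (C_const 0) (C_const 0) Ha).
  intros x; cbv beta. destruct (a x); reflexivity.
Qed.

Lemma C_predc {Y} {a : nat -> nat} : fun_computable Y a -> fun_computable Y (fun x => pred (a x)).
Proof.
  intros Ha. eapply C_ext.
  apply (@C_precc Y (fun _ => 0) (fun q => p1 (p2 q)) (fun _ => 0) a (C_const 0) (C_p1c (C_p2c C_id)) (C_const 0) Ha).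
  intros x; cbv beta. destruct (a x); simpl; autorewrite with pr; reflexivity.
Qed.

Lemma C_iterc {Y} {f a n : nat -> nat} : fun_computable Y f -> fun_computable Y a -> fun_computable Y n ->
  fun_computable Y (fun x => Nat.iter (n x) f (a x)).
Proof.
  intros Hf Ha Hn. eapply C_ext.
  apply (@C_precc Y (fun z => z) (fun q => f (p2 (p2 q))) a n C_id (C_comp Hf (C_p2c (C_p2c C_id))) Ha Hn).
  intros x; cbv beta. generalize (n x) as k. induction k; cbn [prim Nat.iter]; autorewrite with pr; [reflexivity|]. rewrite IHk. reflexivity.
Qed.

Fixpoint ball (P : nat -> bool) (x s : nat) : bool :=
  match s with 0 => true | S s => ball P x s && P (pair x s) end.

Lemma CB_ballc {Y} {P : nat -> bool} {a n : nat -> nat} : CB Y P -> fun_computable Y a -> fun_computable Y n ->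
  CB Y (fun x => ball P (a x) (n x)).
Proof.
  intros HP Ha Hn.
  assert (Hg : CB Y (fun q => negb (p2 (p2 q) =? 0) && P (pair (p1 q) (p1 (p2 q))))).
  { apply CB_and. apply CB_neg. apply CB_eqz. apply C_p2c, C_p2c, C_id.
    apply CB_compc; [exact HP|]. apply C_pair; [apply C_p1c, C_id | apply C_p1c, C_p2c, C_id]. }
  eapply C_ext. apply (C_precc (C_const 1) Hg Ha Hn).
  intros x; cbv beta. generalize (n x) as k. induction k; cbn [prim ball]; [reflexivity|].
  autorewrite with pr. rewrite IHk. destruct (ball P (a x) k); reflexivity.
Qed.

Ltac ctac := repeat first [ apply C_id | apply C_pair | apply C_p1c | apply C_p2c | apply C_Sc | apply C_const ].

Definition stg (q : nat) : nat :=
  if p2 (p2 (p2 q)) =? 0 then pair (p1 (p2 (p2 q))) 1 else pair (S (p1 (p2 (p2 q)))) 0.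

Lemma C_stg {Y} : fun_computable Y stg.
Proof.
  unfold stg. apply C_condc. apply CB_eqz; ctac. ctac. ctac.
Qed.

Lemma odd_div2_S n : Nat.odd (S n) = negb (Nat.odd n) /\
  Nat.div2 (S n) = if Nat.odd n then S (Nat.div2 n) else Nat.div2 n.
Proof.
  assert (O : Nat.odd (S n) = negb (Nat.odd n)) by (rewrite Nat.odd_succ, <- Nat.negb_odd; reflexivity).
  split; [exact O|]. pose proof (Nat.div2_odd n) as H1. pose proof (Nat.div2_odd (S n)) as H2.
  rewrite O in H2. destruct (Nat.odd n); simpl in *; lia.
Qed.

Lemma st_spec n : prim (fun _ => 0) stg 0 n = pair (Nat.div2 n) (bnat (Nat.odd n)).
Proof.
  induction n; [reflexivity|]. cbn [prim]. rewrite IHn. unfold stg.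
  autorewrite with pr. destruct (odd_div2_S n) as [E1 E2]. rewrite E1, E2.
  destruct (Nat.odd n); reflexivity.
Qed.

Lemma C_st {Y} : fun_computable Y (fun x => prim (fun _ => 0) stg 0 x).
Proof. exact (C_precc (C_const 0) C_stg (C_const 0) C_id). Qed.

Lemma C_div2 {Y} : fun_computable Y Nat.div2.
Proof. eapply C_ext. apply (C_p1c C_st). intros x; cbv beta. rewrite st_spec. autorewrite with pr. reflexivity. Qed.

Lemma CB_oddc {Y} {a : nat -> nat} : fun_computable Y a -> CB Y (fun x => Nat.odd (a x)).
Proof. intros Ha. eapply C_ext. apply (C_comp (C_p2c C_st) Ha). intros x; cbv beta. rewrite st_spec. autorewrite with pr. reflexivity. Qed.

Lemma tb_iter x n : Nat.testbit x n = Nat.odd (Nat.iter n Nat.div2 x).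
Proof. revert x; induction n; intros x; [reflexivity|]. rewrite Nat.iter_succ_r. simpl. apply IHn. Qed.

Lemma CB_tbc {Y} {a n : nat -> nat} : fun_computable Y a -> fun_computable Y n -> CB Y (fun x => Nat.testbit (a x) (n x)).
Proof. intros Ha Hn. eapply CB_ext. apply (CB_oddc (C_iterc C_div2 Ha Hn)). intros x; cbv beta. symmetry; apply tb_iter. Qed.

Definition tl (m : nat) : nat := p2 (pred m).
Definition hdb (m : nat) : bool := negb (m =? 0) && negb (p1 (pred m) =? 0).

Lemma C_tl {Y} : fun_computable Y tl.
Proof. unfold tl. apply C_p2c, C_predc, C_id. Qed.
Lemma CB_hdbc {Y} {a : nat -> nat} : fun_computable Y a -> CB Y (fun x => hdb (a x)).
Proof. intros Ha. unfold hdb. apply CB_and; apply CB_neg; apply CB_eqz; [assumption| apply C_p1c, C_predc; assumption]. Qed.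

Lemma iter_tl n nu : Nat.iter n tl (code_bl nu) = code_bl (skipn n nu).
Proof.
  revert nu; induction n; intros nu; [reflexivity|]. rewrite Nat.iter_succ_r.
  destruct nu as [|b l].
  - change (tl (code_bl [])) with (code_bl []). rewrite IHn. destruct n; reflexivity.
  - unfold tl at 2. cbn [code_bl pred]. autorewrite with pr. rewrite IHn. reflexivity.
Qed.

Lemma hdb_code l : hdb (code_bl l) = hd false l.
Proof. destruct l as [|b l]; [reflexivity|]. unfold hdb. cbn [code_bl pred]. autorewrite with pr. destruct b; reflexivity. Qed.

Lemma nth_skipn n (l : list bool) : nth n l false = hd false (skipn n l).
Proof. revert l; induction n; intros [|b l]; simpl; auto. Qed.

Lemma code_zero l : code_bl l = 0 <-> l = [].
Proof. destruct l; simpl; split; congruence. Qed.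

Lemma len_code l : length l <= code_bl l.
Proof. induction l; simpl; [lia|]. pose proof (pair_ge (if a then 1 else 0) (code_bl l)). lia. Qed.

Lemma tb_big x n : x <= n -> Nat.testbit x n = false.
Proof. intros H. destruct x. apply Nat.bits_0. apply Nat.bits_above_log2. pose proof (Nat.log2_lt_lin (S x)). lia. Qed.

Lemma ball_spec P x s : ball P x s = true <-> forall b, b < s -> P (pair x b) = true.
Proof.
  induction s; simpl.
  - split; [intros _ b Hb; lia| reflexivity].
  - rewrite andb_true_iff, IHs. split.
    + intros [H1 H2] b Hb. destruct (Nat.eq_dec b s); [subst; auto| apply H1; lia].
    + intros H; split; [intros; apply H; lia| apply H; lia].
Qed.

Lemma ball_false P x s : ball P x s = false <-> exists b, b < s /\ P (pair x b) = false.
Proof.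
  induction s; simpl.
  - split; [discriminate| intros [b [Hb _]]; lia].
  - rewrite andb_false_iff, IHs. split.
    + intros [[b [Hb Hp]]|Hp]; [exists b; split; [lia|auto]| exists s; auto].
    + intros [b [Hb Hp]]. destruct (Nat.eq_dec b s); [subst; right; auto | left; exists b; split; [lia|auto]].
Qed.

Definition A1 (c1 : nat -> bool) (q : nat) : bool :=
  ball (fun r => c1 (pair (p1 (p1 r)) (pair (p2 (p1 r)) (p2 r)))) (p1 q) (p2 q).
Definition E2 (c2 : nat -> bool) (q : nat) : bool :=
  negb (ball (fun r => negb (c2 (pair (p1 (p1 r)) (pair (p2 (p1 r)) (p2 r))))) (p1 q) (p2 q)).
Definition In2 (c2 : nat -> bool) (q : nat) : bool :=
  ball (fun r => E2 c2 (pair (pair (p1 (p1 r)) (p2 r)) (p2 (p1 r)))) (p1 q) (p2 q).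
Definition Gq (c1 c2 : nat -> bool) (q : nat) : bool :=
  negb (ball (fun r => negb (A1 c1 (pair (pair (p1 (p1 r)) (p2 r)) (p2 (p1 r))) &&
                             In2 c2 (pair (pair (p1 (p1 r)) (p2 (p1 r))) (S (p2 r))))) (p1 q) (p2 q)).
Definition gg c1 c2 i s := Gq c1 c2 (pair (pair i s) s).
Definition cb c1 c2 i n := negb (gg c1 c2 i n).

Lemma CB_A1 {Y c1} : CB Y c1 -> CB Y (A1 c1).
Proof. intros H. unfold A1. apply CB_ballc; [apply CB_compc; [exact H| ctac] | ctac | ctac]. Qed.
Lemma CB_E2 {Y c2} : CB Y c2 -> CB Y (E2 c2).
Proof. intros H. unfold E2. apply CB_neg. apply CB_ballc; [apply CB_neg, CB_compc; [exact H| ctac] | ctac | ctac]. Qed.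
Lemma CB_In2 {Y c2} : CB Y c2 -> CB Y (In2 c2).
Proof. intros H. unfold In2. apply CB_ballc; [apply CB_compc; [exact (CB_E2 H)| ctac] | ctac | ctac]. Qed.
Lemma CB_Gq {Y c1 c2} : CB Y c1 -> CB Y c2 -> CB Y (Gq c1 c2).
Proof.
  intros H1 H2. unfold Gq. apply CB_neg. apply CB_ballc; [|ctac|ctac].
  apply CB_neg, CB_and; [apply CB_compc; [exact (CB_A1 H1)|ctac] | apply CB_compc; [exact (CB_In2 H2)| ctac]].
Qed.
Lemma CB_cbc {Y c1 c2} {i n : nat -> nat} : CB Y c1 -> CB Y c2 -> fun_computable Y i -> fun_computable Y n ->
  CB Y (fun x => cb c1 c2 (i x) (n x)).
Proof.
  intros H1 H2 Hi Hn. unfold cb, gg. apply CB_neg, CB_compc; [exact (CB_Gq H1 H2)|].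
  apply C_pair; [apply C_pair|]; assumption.
Qed.

Lemma A1_spec c1 i a s : A1 c1 (pair (pair i a) s) = true <-> forall b, b < s -> c1 (pair i (pair a b)) = true.
Proof.
  unfold A1. autorewrite with pr. rewrite ball_spec.
  split; intros H b Hb; specialize (H b Hb); cbv beta in *; autorewrite with pr in *; auto.
Qed.
Lemma E2_spec c2 i a s : E2 c2 (pair (pair i a) s) = true <-> exists b, b < s /\ c2 (pair i (pair a b)) = true.
Proof.
  unfold E2. autorewrite with pr. rewrite negb_true_iff, ball_false.
  split; intros [b [Hb H]]; exists b; split; auto; cbv beta in *; autorewrite with pr in *;
    rewrite negb_false_iff in *; auto.
Qed.
Lemma In2_spec c2 i s k : In2 c2 (pair (pair i s) k) = true <-> forall a, a < k -> E2 c2 (pair (pair i a) s) = true.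
Proof.
  unfold In2. autorewrite with pr. rewrite ball_spec.
  split; intros H b Hb; specialize (H b Hb); cbv beta in *; autorewrite with pr in *; auto.
Qed.
Lemma gg_spec c1 c2 i s : gg c1 c2 i s = true <->
  exists a, a < s /\ (forall b, b < s -> c1 (pair i (pair a b)) = true) /\
    (forall a', a' < S a -> exists b, b < s /\ c2 (pair i (pair a' b)) = true).
Proof.
  unfold gg, Gq. autorewrite with pr. rewrite negb_true_iff, ball_false.
  split; intros [a [Ha H]]; exists a; split; auto; cbv beta in *; autorewrite with pr in *.
  - rewrite negb_false_iff, andb_true_iff, A1_spec, In2_spec in H. destruct H as [H1 H2].
    split; auto. intros a' Ha'. apply E2_spec. auto.
  - rewrite negb_false_iff, andb_true_iff, A1_spec, In2_spec. destruct H as [H1 H2].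
    split; auto. intros a' Ha'. apply E2_spec. auto.
Qed.

Lemma bound_ex (Q : nat -> nat -> Prop) k : (forall a, a < k -> exists b, Q a b) ->
  exists B, forall a, a < k -> exists b, b < B /\ Q a b.
Proof.
  induction k; intros H. exists 0; intros; lia.
  destruct IHk as [B HB]. intros; apply H; lia. destruct (H k) as [b Hb]; [lia|].
  exists (Nat.max B (S b)). intros a Ha. destruct (Nat.eq_dec a k).
  - subst; exists b; split; [lia|auto].
  - destruct (HB a) as [b' [Hb' Q']]; [lia|]. exists b'; split; [lia|auto].
Qed.

Lemma lim (X : nat -> bool) c1 c2
  (H1 : forall n, X n = true <-> exists a, forall b, c1 (pair n (pair a b)) = true)
  (H2 : forall n, X n = true <-> forall a, exists b, c2 (pair n (pair a b)) = true) i :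
  exists N, forall s, N <= s -> gg c1 c2 i s = X i.
Proof.
  destruct (X i) eqn:EX.
  - destruct (proj1 (H1 i) EX) as [a Ha]. pose proof (proj1 (H2 i) EX) as Hb.
    destruct (bound_ex (fun a' b => c2 (pair i (pair a' b)) = true) (S a)) as [B HB]; [intros; apply Hb|].
    exists (Nat.max (S a) B). intros s Hs. apply gg_spec. exists a; split; [lia|].
    split; [intros; apply Ha|]. intros a' Ha'. destruct (HB a' Ha') as [b [Hb1 Hb2]].
    exists b; split; [lia|auto].
  - assert (NS : forall a, exists b, c1 (pair i (pair a b)) = false).
    { intros a. destruct (classic (exists b, c1 (pair i (pair a b)) = false)) as [H|H]; [exact H|].
      exfalso. assert (X i = true); [|congruence]. apply H1. exists a. intros b.
      apply not_false_iff_true. intros E. apply H. exists b. exact E. }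
    assert (NP : exists a2, forall b, c2 (pair i (pair a2 b)) = false).
    { destruct (classic (exists a2, forall b, c2 (pair i (pair a2 b)) = false)) as [H|H]; [exact H|].
      exfalso. assert (X i = true); [|congruence]. apply H2. intros a.
      destruct (classic (exists b, c2 (pair i (pair a b)) = true)) as [H'|H']; [exact H'|].
      exfalso. apply H. exists a. intros b. apply not_true_iff_false. intros E. apply H'. exists b. exact E. }
    destruct NP as [a2 Ha2].
    destruct (bound_ex (fun a b => c1 (pair i (pair a b)) = false) a2) as [B HB]; [intros; apply NS|].
    exists B. intros s Hs. destruct (gg c1 c2 i s) eqn:E; [exfalso|reflexivity].
    apply gg_spec in E. destruct E as [a [Ha [G1 G2]]]. destruct (lt_dec a a2).
    + destruct (HB a l) as [b [Hb Hf]]. rewrite G1 in Hf by lia. discriminate.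
    + destruct (G2 a2) as [b [Hb Ht]]; [lia|]. rewrite Ha2 in Ht. discriminate.
Qed.

Lemma gen_ev b s : gen b s -> exists N, forall n, N <= n -> s n = b.
Proof.
  induction 1. exists 0; auto. destruct IHgen as [N HN]. exists (Nat.max N (length nu)).
  intros n Hn. unfold F. rewrite HN by lia. rewrite nth_overflow by lia. apply xorb_false_r.
Qed.

Lemma nth_map_seq (f : nat -> bool) N n : n < N -> nth n (map f (seq 0 N)) false = f n.
Proof.
  intros H. rewrite (@nth_indep _ (map f (seq 0 N)) n false (f 0)) by (rewrite length_map, length_seq; lia).
  rewrite map_nth, seq_nth by lia. reflexivity.
Qed.

Lemma ev_gen b s : (exists N, forall n, N <= n -> s n = b) -> gen b s.
Proof.
  intros [N HN]. set (nu := map (fun n => xorb b (s n)) (seq 0 N)).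
  assert (E : s = F nu (fun _ => b)).
  { apply functional_extensionality; intros n. unfold F. destruct (lt_dec n N).
    - unfold nu. rewrite nth_map_seq by auto. destruct b, (s n); reflexivity.
    - rewrite nth_overflow. rewrite HN by lia. destruct b; reflexivity.
      unfold nu; rewrite length_map, length_seq; lia. }
  rewrite E. apply gen_step, gen_base.
Qed.

Lemma bits_surj N : forall d : nat -> bool, (forall n, N <= n -> d n = false) ->
  exists x, forall n, Nat.testbit x n = d n.
Proof.
  induction N; intros d Hd.
  - exists 0. intros n. rewrite Nat.bits_0. symmetry; apply Hd; lia.
  - destruct (IHN (fun n => d (S n))) as [x Hx]. { intros; apply Hd; lia. }
    exists (2 * x + bnat (d 0)). intros [|n].
    + destruct (d 0); simpl bnat. apply Nat.testbit_odd_0. rewrite Nat.add_0_r. apply Nat.testbit_even_0.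
    + destruct (d 0); simpl bnat.
      * rewrite Nat.testbit_odd_succ by apply Nat.le_0_l. apply Hx.
      * rewrite Nat.add_0_r, Nat.testbit_even_succ by apply Nat.le_0_l. apply Hx.
Qed.

Definition QG (r : nat) : bool :=
  Bool.eqb (Nat.testbit (p2 (p2 (p2 (p1 r)))) (p2 r))
           (xorb (Nat.testbit (p1 (p2 (p2 (p1 r)))) (p2 r)) (hdb (Nat.iter (p2 r) tl (p1 (p2 (p1 r)))))).
Definition PGb (p : nat) : bool := ball QG p p.
Definition QR c1 c2 (r : nat) : bool :=
  (Nat.iter (p2 r) tl (p1 (p2 (p1 r))) =? 0) ||
  Bool.eqb (xorb (cb c1 c2 (p1 (p1 r)) (p2 r)) (Nat.testbit (p2 (p2 (p1 r))) (p2 r)))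
           (hdb (Nat.iter (p2 r) tl (p1 (p2 (p1 r))))).
Definition PRb c1 c2 (p : nat) : bool := ball (QR c1 c2) p (p1 (p2 p)).

Lemma CB_PG {Y} : CB Y PGb.
Proof.
  unfold PGb, QG. apply CB_ballc; [|ctac|ctac].
  apply CB_eqb. apply CB_tbc; ctac. apply CB_xorb. apply CB_tbc; ctac.
  apply CB_hdbc, C_iterc; [exact C_tl| ctac | ctac].
Qed.

Lemma CB_PR {Y c1 c2} : CB Y c1 -> CB Y c2 -> CB Y (PRb c1 c2).
Proof.
  intros H1 H2. unfold PRb, QR. apply CB_ballc; [|ctac|ctac].
  apply CB_or. apply CB_eqz, C_iterc; [exact C_tl|ctac|ctac].
  apply CB_eqb. apply CB_xorb. apply CB_cbc; [exact H1|exact H2|ctac|ctac]. apply CB_tbc; ctac.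
  apply CB_hdbc, C_iterc; [exact C_tl| ctac | ctac].
Qed.

Lemma PG_spec i nu x y : PGb (pair i (pair (code_bl nu) (pair x y))) = true <->
  forall n, Nat.testbit y n = xorb (Nat.testbit x n) (nth n nu false).
Proof.
  unfold PGb. rewrite ball_spec.
  assert (Hp : code_bl nu + (x + y) <= pair i (pair (code_bl nu) (pair x y))).
  { pose proof (pair_ge i (pair (code_bl nu) (pair x y))). pose proof (pair_ge (code_bl nu) (pair x y)).
    pose proof (pair_ge x y). lia. }
  pose proof (len_code nu) as HL.
  split.
  - intros H n. destruct (lt_dec n (pair i (pair (code_bl nu) (pair x y)))).
    + specialize (H n l). unfold QG in H. autorewrite with pr in H.
      rewrite iter_tl, hdb_code, <- nth_skipn in H. apply eqb_prop in H. exact H.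
    + rewrite !tb_big by lia. rewrite nth_overflow by lia. reflexivity.
  - intros H n Hn. unfold QG. autorewrite with pr. rewrite iter_tl, hdb_code, <- nth_skipn, H. apply eqb_reflx.
Qed.

Lemma PR_spec c1 c2 i nu x : PRb c1 c2 (pair i (pair (code_bl nu) x)) = true <->
  forall n, n < length nu -> xorb (cb c1 c2 i n) (Nat.testbit x n) = nth n nu false.
Proof.
  unfold PRb. autorewrite with pr. rewrite ball_spec. pose proof (len_code nu) as HL. split.
  - intros H n Hn. specialize (H n ltac:(lia)). unfold QR in H. autorewrite with pr in H.
    rewrite iter_tl, hdb_code, <- nth_skipn in H.
    assert (E0 : (code_bl (skipn n nu) =? 0) = false).
    { apply Nat.eqb_neq. intros E. apply code_zero in E. apply (f_equal (@length bool)) in E.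
      rewrite length_skipn in E. simpl in E. lia. }
    rewrite E0 in H. simpl in H. apply eqb_prop; auto.
  - intros H n Hn. unfold QR. autorewrite with pr. rewrite iter_tl, hdb_code, <- nth_skipn.
    destruct (le_lt_dec (length nu) n).
    + rewrite (skipn_all2 nu l). reflexivity.
    + rewrite H by lia. rewrite eqb_reflx. apply orb_true_r.
Qed.

Theorem lemma4p7 (Y X : nat -> bool) :
  Delta02 Y X ->
  exists C : nat -> rstruct,
    unif_computable Y C /\
    forall i : nat,
      (X i = true -> iso_S (C i) false) /\
      (X i = false -> iso_S (C i) true).
Proof.
  intros [[R1 [[c1 [Hc1 Cc1]] HS]] [R2 [[c2 [Hc2 Cc2]] HP]]].
  assert (CB1 : CB Y c1) by exact Cc1. assert (CB2 : CB Y c2) by exact Cc2.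
  assert (H1 : forall n, X n = true <-> exists a, forall b, c1 (pair n (pair a b)) = true).
  { intros n. rewrite HS. split; intros [a Ha]; exists a; intros b; apply Hc1; apply Ha. }
  assert (H2 : forall n, X n = true <-> forall a, exists b, c2 (pair n (pair a b)) = true).
  { intros n. rewrite HP. split; intros H a; destruct (H a) as [b Hb]; exists b; apply Hc2; exact Hb. }
  exists (fun i => {| rG := fun nu x y => PGb (pair i (pair (code_bl nu) (pair x y))) = true;
                    rR := fun nu x => PRb c1 c2 (pair i (pair (code_bl nu) x)) = true |}).
  split.
  - split.
    + exists (fun p => PGb p = true). split.
      * exists PGb. split; [intros; tauto| exact (@CB_PG Y)].
      * intros; simpl; tauto.
    + exists (fun p => PRb c1 c2 p = true). split.
      * exists (PRb c1 c2). split; [intros; tauto| exact (CB_PR CB1 CB2)].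
      * intros; simpl; tauto.
  - intros i.
    assert (Iso : iso_S {| rG := fun nu x y => PGb (pair i (pair (code_bl nu) (pair x y))) = true;
                    rR := fun nu x => PRb c1 c2 (pair i (pair (code_bl nu) x)) = true |} (negb (X i))).
    { destruct (lim X c1 c2 H1 H2 i) as [N HN].
      assert (Hc : forall n, N <= n -> cb c1 c2 i n = negb (X i)).
      { intros n Hn; unfold cb; rewrite HN; auto. }
      exists (fun x n => xorb (cb c1 c2 i n) (Nat.testbit x n)).
      split; [|split; [|split; [|split]]].
      - intros x. apply ev_gen. exists (N + x). intros n Hn. cbv beta.
        rewrite Hc by lia. rewrite tb_big by lia. apply xorb_false_r.
      - intros x y H. apply Nat.bits_inj. intros n. specialize (H n). cbv beta in H.
        destruct (cb c1 c2 i n), (Nat.testbit x n), (Nat.testbit y n); simpl in H; congruence.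
      - intros s Hs. destruct (gen_ev _ _ Hs) as [M HM].
        destruct (bits_surj (N + M) (fun n => xorb (cb c1 c2 i n) (s n))) as [x Hx].
        { intros n Hn. rewrite Hc, HM by lia. apply xorb_nilpotent. }
        exists x. intros n. rewrite Hx. destruct (cb c1 c2 i n), (s n); reflexivity.
      - intros nu x y. cbn [rG]. rewrite PG_spec. unfold F.
        split; intros H n; specialize (H n);
          destruct (cb c1 c2 i n), (Nat.testbit x n), (Nat.testbit y n), (nth n nu false);
          simpl in *; congruence.
      - intros nu x. cbn [rR]. rewrite PR_spec. unfold Rnu.
        split; intros H n Hn; apply H; auto. }
    split; intros E; rewrite E in Iso; exact Iso.
Qed.
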